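(* Let $\Sigma=\{0,1\}$. Define $\delta:\Sigma^*\times\Sigma^*\to\mathbb{Z}_{\ge0}$ by $\delta(u,v)=d_2(u,v)$ for $u,v\ne\varepsilon$, and $\delta(u,\varepsilon)=\delta(\varepsilon,u)$ given by $\delta(\varepsilon,\varepsilon)=0$, $\delta(000,\varepsilon)=1$, and $\delta(u,\varepsilon)=d_2(u,000)$ for $u\notin\{\varepsilon,000\}$. Then $\delta$ is an integer-valued Hamming compatible metric on $\Sigma^*$ which is not weakly uniform, and $\delta(000,\varepsilon)=1<2=d_2(000,\varepsilon)$.
   Context: $\Sigma^*$ is the set of all finite words over $\Sigma$, $l(u)$ the length of $u$, $\varepsilon$ the empty word, $H$ the Hamming distance between equal-length words. For arbitrary $x,y$, if $l(x)\ge l(y)$, $\underline{x}$ is the prefix of $x$ of length $l(y)$ and $\underline{y}=y$ (symmetrically otherwise). $d_2(x,y)=H(\underline{x},\underline{y})+\lceil |l(x)-l(y)|/2\rceil$ (a metric on $\Sigma^*$). A metric $\delta$ is Hamming compatible if $\delta(x,y)=H(x,y)$ whenever $l(x)=l(y)$. Two words of the same length $n$ are Hamming opposites if their Hamming distance is $n$; $\delta$ is weakly uniform if $\delta(x,\varepsilon)=\delta(y,\varepsilon)$ for all Hamming opposites $x,y$. *)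

(* Defs.v *)
(* Words over Sigma = {0,1} are  seq bool  (false = 0, true = 1). *)
From mathcomp Require Import all_boot.
Set Implicit Arguments. Unset Strict Implicit. Unset Printing Implicit Defensive.

Definition word := seq bool.

(* Hamming distance: number of positions where the words differ
   (only meaningful / only used for words of equal length). *)
Definition hamming (x y : word) : nat :=
  count (fun p : bool * bool => p.1 != p.2) (zip x y).

(* d_2(x,y) = H(prefixes of common length) + ceil(|l(x)-l(y)|/2). *)
Definition d2 (x y : word) : nat :=
  let m := minn (size x) (size y) in
  hamming (take m x) (take m y)
  + uphalf ((size x - size y) + (size y - size x)).

Definition w000 : word := [:: false; false; false].

Definition delta_eps (u : word) : nat :=
  if u == [::] then 0 else if u == w000 then 1 else d2 u w000.

Definition delta (u v : word) : nat :=
  if v == [::] then delta_eps u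
  else if u == [::] then delta_eps v
  else d2 u v.

Definition is_metric (d : word -> word -> nat) : Prop :=
  (forall x y, d x y = 0 <-> x = y) /\
  (forall x y, d x y = d y x) /\
  (forall x y z, d x z <= d x y + d y z).

Definition hamming_compatible (d : word -> word -> nat) : Prop :=
  forall x y, size x = size y -> d x y = hamming x y.

Definition hamming_opposites (x y : word) : Prop :=
  size x = size y /\ hamming x y = size x.

Definition weakly_uniform (d : word -> word -> nat) : Prop :=
  forall x y, hamming_opposites x y -> d x [::] = d y [::].

(* Main.v *)
Require Import Defs.
From mathcomp Require Import all_boot.
From mathcomp Require Import zify.

Lemma half_spec n : (n <= 2 * uphalf n <= n + 1) /\ (2 * half n <= n <= 2 * half n + 1).
Proof.
elim: n => [|n [IH1 IH2]] //=; lia.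
Qed.

Lemma uh n : n <= 2 * uphalf n <= n + 1.
Proof. by case: (half_spec n). Qed.

Lemma ham_cons a b x y : hamming (a :: x) (b :: y) = (a != b) + hamming x y.
Proof. by []. Qed.

Lemma d2_nil_l y : d2 [::] y = uphalf (size y).
Proof. rewrite /d2 /= min0n take0 sub0n subn0 /hamming /=; by case: y. Qed.

Lemma d2_nil_r x : d2 x [::] = uphalf (size x).
Proof. rewrite /d2 /= minn0 take0 sub0n subn0 addn0 /hamming /=; by case: x. Qed.

Lemma d2_cons a b x y : d2 (a :: x) (b :: y) = (a != b) + d2 x y.
Proof. by rewrite /d2 /= minnSS /= ham_cons !subSS addnA. Qed.

Lemma d2_lb x y : uphalf (size x - size y + (size y - size x)) <= d2 x y.
Proof.
elim: x y => [|a x IH] [|b y]; rewrite ?d2_nil_l ?d2_nil_r ?d2_cons /= ?subn0 ?sub0n ?addn0 //.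
rewrite !subSS; have := IH y; lia.
Qed.

Lemma d2_ub x y : d2 x y <= minn (size x) (size y) + uphalf (size x - size y + (size y - size x)).
Proof.
elim: x y => [|a x IH] [|b y]; rewrite ?d2_nil_l ?d2_nil_r ?d2_cons /= ?subn0 ?sub0n ?addn0 ?min0n ?minn0 //.
rewrite !subSS minnSS; have := IH y; case: (a != b) => /=; lia.
Qed.

Lemma d2_sym x y : d2 x y = d2 y x.
Proof.
elim: x y => [|a x IH] [|b y]; rewrite ?d2_nil_l ?d2_nil_r ?d2_cons //.
by rewrite IH eq_sym.
Qed.

Lemma d2_0 x y : d2 x y = 0 <-> x = y.
Proof.
split; last by move=> ->; elim: y => [|b y IH]; rewrite ?d2_nil_l ?d2_cons ?eqxx.
elim: x y => [|a x IH] [|b y]; rewrite ?d2_nil_l ?d2_nil_r ?d2_cons //=.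
case: (a =P b) => [->|_] //= h.
by rewrite add0n in h; rewrite (IH y h).
Qed.

Lemma d2_tri x y z : d2 x z <= d2 x y + d2 y z.
Proof.
elim: x y z => [|a x IH] [|b y] [|c z]; rewrite ?d2_nil_l ?d2_nil_r //.
- have := d2_lb (b :: y) (c :: z); have := uh (size (c :: z)); have := uh (size (b :: y)).
  have := uh (size (b :: y) - size (c :: z) + (size (c :: z) - size (b :: y))).
  lia.
- lia.
- have := d2_ub (a :: x) (c :: z); have := uh (size (c :: z)); have := uh (size (a :: x)).
  have := uh (size (a :: x) - size (c :: z) + (size (c :: z) - size (a :: x))).
  lia.
- have := d2_lb (a :: x) (b :: y); have := uh (size (a :: x)); have := uh (size (b :: y)).
  have := uh (size (a :: x) - size (b :: y) + (size (b :: y) - size (a :: x))).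
  lia.
- rewrite !d2_cons; have := IH y z; case: a; case: b; case: c => /=; lia.
Qed.

Lemma eps_max u : u != [::] -> delta_eps u = maxn 1 (d2 u w000).
Proof.
move=> hu; rewrite /delta_eps (negbTE hu).
case: (eqVneq u w000) => [->|hne] //.
have : d2 u w000 <> 0 by move/d2_0 => e; rewrite e eqxx in hne.
lia.
Qed.

Lemma eps_cons a u : delta_eps (a :: u) = maxn 1 (d2 (a :: u) w000).
Proof. exact: eps_max. Qed.

Lemma eps0 u : delta_eps u = 0 <-> u = [::].
Proof.
split; last by move=> ->.
case: (eqVneq u [::]) => // hu; rewrite eps_max //; lia.
Qed.

Theorem mainTheorem11 :
  is_metric delta /\ hamming_compatible delta /\ ~ weakly_uniform delta /\
  delta w000 [::] = 1 /\ d2 w000 [::] = 2.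
Proof.
split; [|split; [|split; [|by []]]].
- split; [|split].
  + move=> [|a x] [|b y]; rewrite /delta /=.
    * by [].
    * by rewrite eps0.
    * by rewrite eps0.
    * exact: d2_0.
  + move=> [|a x] [|b y]; rewrite /delta //=; exact: d2_sym.
  + move=> [|a x] [|b y] [|c z]; rewrite /delta /= ?eps_cons //.
    * have := d2_tri (c :: z) (b :: y) w000; rewrite (d2_sym (c :: z) (b :: y)); lia.
    * exact: leq_addr.
    * have := d2_tri (a :: x) w000 (c :: z); rewrite (d2_sym w000 (c :: z)); lia.
    * have := d2_tri (a :: x) (b :: y) w000; lia.
    * exact: d2_tri.
- move=> [|a x] [|b y] //= [] hs.
  rewrite /delta /= d2_cons ham_cons; congr (_ + _).
  rewrite /d2 hs minnn subnn addn0 take_size -{1}hs take_size /=; exact: addn0.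
- move=> h; have := h w000 [:: true; true; true].
  by rewrite /hamming_opposites => /(_ (conj erefl erefl)).
Qed.
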